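(* Let $N\ge2$ and $r\in(0,1)$. The revenue guarantee of the second price auction with random reserve distributed according to $G_r(x)=(x/r)^{\frac1{N-1}}$, $x\in[0,r]$, is at least $$\int_{[0,r]}\frac{x^{\frac N{N-1}}}{r^{\frac1{N-1}}}\,dF(x)+r(1-F(r)).$$
   Context: A single indivisible good is sold to $N$ bidders with private values $v_i\in[0,1]$, each with the same marginal cdf $F$ on $[0,1]$ (point masses allowed). $\Pi(F)$ is the set of probability measures on $[0,1]^N$ with all one-dimensional marginals $F$. The revenue guarantee of a mechanism with payments $t$ (under truthful bidding) is $\inf_{\pi\in\Pi(F)}\int\sum_it_i\,d\pi$. The second price auction with random reserve distributed as a cdf $G$: a reserve $\rho\sim G$ is drawn independently of bids; a highest bidder (ties broken uniformly at random) wins if her bid is at least $\rho$ and pays $\max(\rho,\text{second highest bid})$; equivalently a unique highest bidder with value $v_{(1)}$ wins with probability $G(v_{(1)})$ and pays $v_{(1)}G(v_{(1)})-\int_{v_{(2)}}^{v_{(1)}}G(s)\,ds$, where $v_{(2)}$ is the second highest value. *)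

(* Defs.v *)
From HB Require Import structures.
From mathcomp Require Import all_boot all_order all_algebra.
From mathcomp Require Import all_classical all_reals all_analysis.
Set Implicit Arguments. Unset Strict Implicit. Unset Printing Implicit Defensive.
Import Order.TTheory GRing.Theory Num.Theory.
Local Open Scope classical_set_scope.
Local Open Scope ring_scope.

(* Highest value v_(1) of a bid profile (values lie in [0,1], so the
   neutral element 0 is harmless). *)
Definition vfirst (R : realType) (N : nat) (v : 'I_N -> R) : R :=
  \big[Num.max/0]_(i < N) v i.

Definition vsecond (R : realType) (N : nat) (v : 'I_N -> R) : R :=
  \big[Num.max/0]_(i < N) \big[Num.max/0]_(j < N | j != i) Num.min (v i) (v j).

Definition Gr (R : realType) (N : nat) (r : R) (x : R) : R :=
  if x < 0 then 0
  else if x <= r then (x / r) `^ (1 / (N.-1)%:R)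
  else 1.

(* Expected revenue (over the independent reserve rho ~ G) of the second price
   auction with random reserve G at value profile v:
   v_(1) G(v_(1)) - int_{v_(2)}^{v_(1)} G(s) ds. *)
Definition spa_revenue (R : realType) (N : nat) (G : R -> R) (v : 'I_N -> R) : R :=
  vfirst v * G (vfirst v)
  - Rintegral (@lebesgue_measure R) `[vsecond v, vfirst v] G.

(* Main.v *)
Require Import Defs.
From HB Require Import structures.
From mathcomp Require Import all_boot all_order all_algebra.
From mathcomp Require Import all_classical all_reals all_analysis.
From mathcomp Require Import measurable_realfun.
From mathcomp Require Import ring lra.
Import Order.TTheory GRing.Theory Num.Theory.
Import numFieldNormedType.Exports.
Local Open Scope classical_set_scope.
Local Open Scope ring_scope.

Lemma alpha_gt0 (R : realType) (N : nat) : (2 <= N)%N -> 0 < 1 / (N.-1)%:R :> R.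
Proof. by move=> N2; rewrite divr_gt0// ltr0n; case: N N2 => [|[|n]]. Qed.

Lemma Gr_ge0 (R : realType) N (r x : R) : 0 <= Gr N r x.
Proof. by rewrite /Gr; case: ifP => // _; case: ifP => // _; exact: powR_ge0. Qed.

Lemma Gr_le1 (R : realType) N (r x : R) : (2 <= N)%N -> 0 < r -> Gr N r x <= 1.
Proof.
move=> N2 r0; rewrite /Gr; case: ifPn => // x0; case: ifPn => // xr.
rewrite -leNgt in x0.
have := @ge0_ler_powR R (1 / (N.-1)%:R) (ltW (alpha_gt0 R N N2)) (x / r) 1.
rewrite powR1 => ->//; rewrite ?nnegrE ?divr_ge0 ?(ltW r0)//.
by rewrite ler_pdivrMr ?mul1r.
Qed.

Lemma Gr_nd (R : realType) N (r : R) : (2 <= N)%N -> 0 < r ->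
  {homo Gr N r : x y / x <= y}.
Proof.
move=> N2 r0 x y xy.
have [x0|x0] := ltP x 0; first by rewrite {1}/Gr x0 Gr_ge0.
have [yr|yr] := ltP r y; first by rewrite [Gr N r y]/Gr ltNge (le_trans x0 xy)/= (leNgt y r) yr /= Gr_le1.
rewrite /Gr ltNge x0 ltNge (le_trans x0 xy) /= (le_trans xy yr) yr.
apply: (@ge0_ler_powR R (1 / (N.-1)%:R) (ltW (alpha_gt0 R N N2))).
- by rewrite nnegrE divr_ge0// (ltW r0).
- by rewrite nnegrE divr_ge0// ?(ltW r0)// (le_trans x0 xy).
- by rewrite ler_pM2r// invr_gt0.
Qed.

Lemma Gr_eq (R : realType) N (r x : R) : 0 < r -> 0 <= x -> x <= r ->
  Gr N r x = (r `^ (1 / (N.-1)%:R))^-1 * x `^ (1 / (N.-1)%:R).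
Proof.
move=> r0 x0 xr; rewrite /Gr ltNge x0 xr /=.
set a := 1 / (N.-1)%:R.
rewrite powRM ?invr_ge0 ?(ltW r0)// mulrC; congr (_ * _).
have h : r `^ a * (r^-1) `^ a = 1.
  by rewrite -powRM ?invr_ge0 ?(ltW r0)// mulfV ?gt_eqF// powR1.
apply: (@mulfI _ (r `^ a)); first by rewrite gt_eqF// powR_gt0.
by rewrite h mulfV// gt_eqF// powR_gt0.
Qed.

Lemma Gr0 (R : realType) N (r : R) : (2 <= N)%N -> 0 < r -> Gr N r 0 = 0.
Proof.
move=> N2 r0; rewrite /Gr ltxx (ltW r0) mul0r powR0//.
by rewrite gt_eqF// alpha_gt0.
Qed.

Lemma Gr_ger (R : realType) N (r x : R) : 0 < r -> r <= x -> Gr N r x = 1.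
Proof.
move=> r0 rx; rewrite /Gr ltNge (le_trans (ltW r0) rx) /=.
case: ifPn => // xr; have -> : x = r by apply/eqP; rewrite eq_le xr rx.
by rewrite mulfV ?gt_eqF// powR1.
Qed.

Lemma J_small (R : realType) N (r x : R) : (2 <= N)%N -> 0 < r -> 0 <= x -> x <= r ->
  Rintegral (@lebesgue_measure R) `[0, x] (Gr N r) =
  ((r `^ (1 / (N.-1)%:R))^-1 / (1 + 1 / (N.-1)%:R)) * x `^ (1 + 1 / (N.-1)%:R).
Proof.
move=> N2 r0 x0 xr.
have a0 := alpha_gt0 R N N2.
set a := 1 / (N.-1)%:R in a0 *.
set b := 1 + a; set c := (r `^ a)^-1.
have b0 : 0 < b by rewrite /b addr_gt0.
move: x0; rewrite le_eqVlt => /predU1P[<-|x0].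
  by rewrite set_itv1 Rintegral_set1 powR0 ?mulr0// gt_eqF.
pose F := fun t : R => (c / b) * t `^ b.
pose g := fun t : R => c * t `^ a.
have dF (t : R) : 0 < t -> is_derive t 1 F (c * t `^ a).
  move=> t0; apply: is_derive_eq.
    exact: (is_deriveZ (c / b) (is_derive1_powR b t0)).
  by rewrite /b [1 + a]addrC addrK /GRing.scale /= mulrA divfK// gt_eqF// addr_gt0.
have dg (y : R) : 0 < y -> derivable g y 1.
  move=> t0; exact: (@ex_derive _ _ _ _ _ _ _ (is_deriveZ c (is_derive1_powR a t0))).
have cg (y : R) : 0 < y -> {for y, continuous g}.
  by move=> t0; apply: differentiable_continuous; apply/derivable1_diffP; exact: dg.
have cF (y : R) : 0 < y -> {for y, continuous F}.
  move=> t0; apply: differentiable_continuous; apply/derivable1_diffP.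
  exact: (@ex_derive _ _ _ _ _ _ _ (dF y t0)).
have cGr : {within `[0, x], continuous Gr N r}.
  apply: derivable_oo_LRcontinuous_within; split.
  - move=> t; rewrite in_itv/= => /andP[t0 tx].
    apply: (@near_eq_derivable _ _ _ g); last exact: dg.
    near=> s; rewrite /g Gr_eq//; first by apply: ltW; near: s; exact: lt_nbhsr.
    by apply: ltW; near: s; apply: lt_nbhsl; exact: (lt_le_trans tx xr).
  - rewrite Gr0//.
    apply: (@cvg_trans _ (g @ 0^'+)).
      apply: near_eq_cvg; near=> s; rewrite /g Gr_eq//; apply: ltW; near: s.
        exact: nbhs_right_lt.
    by have := cvgMl_tmp (a := c) (powR_cvg0 a0); rewrite mulr0; apply; exact: _.
  - apply: (@cvg_trans _ (g @ x^'-)).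
      apply: near_eq_cvg; near=> s; rewrite /g Gr_eq//.
        by apply: ltW; near: s; exact: nbhs_left_gt.
      by apply: ltW; apply: (lt_le_trans _ xr); near: s; exact: nbhs_left_lt.
    by rewrite Gr_eq ?(ltW x0)//; apply: cvg_at_left_filter; exact: cg.
have LRF : derivable_oo_LRcontinuous F 0 x.
  split.
  - move=> t; rewrite in_itv/= => /andP[t0 tx].
    exact: (@ex_derive _ _ _ _ _ _ _ (dF t t0)).
  - rewrite /F powR0 ?gt_eqF// mulr0.
    by have := cvgMl_tmp (a := c / b) (powR_cvg0 b0); rewrite mulr0; apply; exact: _.
  - by apply: cvg_at_left_filter; exact: cF.
have F'f : {in `]0, x[, (F^`())%classic =1 Gr N r}.
  move=> t; rewrite in_itv/= => /andP[t0 tx].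
  rewrite derive1E (@derive_val _ _ _ _ _ _ _ (dF t t0)) Gr_eq ?(ltW t0)//.
  exact: ltW (lt_le_trans tx xr).
rewrite /Rintegral (continuous_FTC2 x0 cGr LRF F'f) /F powR0 ?gt_eqF// mulr0 sube0.
by [].
Unshelve. all: by end_near.
Qed.

Lemma Gr_int (R : realType) N (r u v : R) : (2 <= N)%N -> 0 < r ->
  (@lebesgue_measure R).-integrable `[u, v] (EFin \o Gr N r).
Proof.
move=> N2 r0; apply: measurable_bounded_integrable => //.
- set m := (X in (X < _)%E).
  have -> : (m = if (u%:E < v%:E)%E then (v%:E - u%:E)%E else 0%E)
    by exact: (lebesgue_measure_itv `[u, v]).
  by case: ifP => _; rewrite ?ltry.
- by apply: nondecreasing_measurable => //; exact: Gr_nd.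
- exists 1; split; first exact: num_real.
  move=> M M1 t _ /=; rewrite ger0_norm ?Gr_ge0//.
  exact: le_trans (Gr_le1 _ _ _ _ N2 r0) (ltW M1).
Qed.

Lemma J_large (R : realType) N (r x : R) : (2 <= N)%N -> 0 < r -> r <= x ->
  Rintegral (@lebesgue_measure R) `[0, x] (Gr N r) =
  Rintegral (@lebesgue_measure R) `[0, r] (Gr N r) + (x - r).
Proof.
move=> N2 r0 rx.
have := @Rintegral_itvB R (Gr N r) (BLeft 0) (BRight x) r (Gr_int _ _ _ _ _ N2 r0).
rewrite !bnd_simp (ltW r0) rx => /(_ erefl erefl) h.
apply/eqP; rewrite -subr_eq0 opprD addrA; apply/eqP.
rewrite [X in X - _ - _]/= h.
rewrite (@eq_Rintegral _ _ _ _ _ (fun=> 1)); last first.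
  move=> t; rewrite inE/= in_itv/= => /andP[rt _].
  by rewrite Gr_ger// ltW.
rewrite Rintegral_cst// mul1r.
set m := (X in fine X).
have -> : (m = if (r%:E < x%:E)%E then (x%:E - r%:E)%E else 0%E)
  by exact: (lebesgue_measure_itv `]r, x]).
rewrite lte_fin; case: ifPn => [_|]; first by rewrite -EFinB /= subrr.
rewrite -leNgt => xr; have -> : x = r by apply/eqP; rewrite eq_le xr rx.
by rewrite subrr subr0.
Qed.

Definition psi {R : realType} N (r x : R) := Num.min x r * Gr N r (Num.min x r).
Definition Jf {R : realType} N (r x : R) :=
  ((N.-1)%:R / N%:R) * psi N r x + Num.max (x - r) 0.

Lemma natN1 (R : realType) N : (2 <= N)%N -> N%:R = (N.-1)%:R + 1 :> R.
Proof. by move=> N2; rewrite natr1 prednK// ltnW. Qed.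

Lemma J_small' (R : realType) N (r x : R) : (2 <= N)%N -> 0 < r -> 0 <= x -> x <= r ->
  Rintegral (@lebesgue_measure R) `[0, x] (Gr N r) = Jf N r x.
Proof.
move=> N2 r0 x0 xr; rewrite J_small// /Jf /psi.
have -> : Num.min x r = x by apply/min_idPl.
have -> : Num.max (x - r) 0 = 0 by apply/max_idPr; rewrite subr_le0.
rewrite addr0 Gr_eq//.
have n0 : (N.-1)%:R != 0 :> R by rewrite gt_eqF// ltr0n; case: N N2 => [|[|n]].
have a0 := alpha_gt0 R N N2.
set a := 1 / (N.-1)%:R in a0 *.
rewrite powRD; last by rewrite gt_eqF ?implybT// addr_gt0.
rewrite powRr1//.
rewrite /a (natN1 R N N2); field.
by rewrite n0 gt_eqF ?powR_gt0// -(natN1 R N N2) /= pnatr_eq0 gtn_eqF// ltnW.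
Show.
Qed.

Lemma J_formula (R : realType) N (r x : R) : (2 <= N)%N -> 0 < r -> 0 <= x ->
  Rintegral (@lebesgue_measure R) `[0, x] (Gr N r) = Jf N r x.
Proof.
move=> N2 r0 x0; have [xr|rx] := leP x r; first exact: J_small'.
rewrite J_large ?(ltW rx)// J_small' ?(ltW r0)// /Jf /psi.
rewrite (min_idPr (ltW rx)) minxx subrr maxxx addr0.
by rewrite (max_idPl _) ?subr_ge0 ?(ltW rx).
Qed.

Lemma Rint_ab (R : realType) N (r a b : R) : (2 <= N)%N -> 0 < r -> 0 <= a -> a <= b ->
  Rintegral (@lebesgue_measure R) `[a, b] (Gr N r) = Jf N r b - Jf N r a.
Proof.
move=> N2 r0 a0 ab.
have := @Rintegral_itvB R (Gr N r) (BLeft 0) (BRight b) a (Gr_int _ _ _ _ _ N2 r0).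
rewrite !bnd_simp a0 ab => /(_ erefl erefl) h.
rewrite -J_formula ?(le_trans a0 ab)// -J_formula//; rewrite [RHS]h; symmetry.
rewrite Rintegral_itv_obnd_cbnd//.
have := Gr_int R N r a b N2 r0; apply: integrableS => //.
by apply: subset_itvr; rewrite bnd_simp.
Qed.

Lemma Gr_lt0 (R : realType) N (r x : R) : x < 0 -> Gr N r x = 0.
Proof. by move=> x0; rewrite /Gr x0. Qed.

Lemma psi_ge0 (R : realType) N (r x : R) : 0 <= psi N r x.
Proof.
rewrite /psi; set m := Num.min x r.
have [m0|m0] := ltP m 0; first by rewrite Gr_lt0// mulr0.
by rewrite mulr_ge0// Gr_ge0.
Qed.

Lemma psi_nd (R : realType) N (r : R) : (2 <= N)%N -> 0 < r ->
  {homo psi N r : x y / x <= y}.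
Proof.
move=> N2 r0 x y xy; rewrite {1}/psi.
set m := Num.min x r.
have [m0|m0] := ltP m 0; first by rewrite Gr_lt0// mulr0 psi_ge0.
have my : m <= Num.min y r by rewrite le_min ge_min xy /= ge_min lexx orbT.
rewrite /psi ler_pM// ?Gr_ge0//; exact: Gr_nd.
Qed.

Lemma vfirst_ge (R : realType) N (v : 'I_N -> R) i : v i <= vfirst v.
Proof. exact: le_bigmax. Qed.

Lemma vfirst_ge0 (R : realType) N (v : 'I_N -> R) : 0 <= vfirst v.
Proof. exact: bigmax_ge_id. Qed.

Lemma vsecond_ge0 (R : realType) N (v : 'I_N -> R) : 0 <= vsecond v.
Proof. exact: bigmax_ge_id. Qed.

Lemma vsecond_le (R : realType) N (v : 'I_N -> R) : vsecond v <= vfirst v.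
Proof.
apply: bigmax_le; first exact: vfirst_ge0.
move=> i _; apply: bigmax_le; first exact: vfirst_ge0.
move=> j _; by rewrite ge_min vfirst_ge.
Qed.

Lemma vsecond_ge (R : realType) N (v : 'I_N -> R) i j : j != i ->
  Num.min (v i) (v j) <= vsecond v.
Proof.
move=> ji; apply: (@bigmax_sup _ _ _ _ i) => //.
exact: (@le_bigmax_cond _ _ _ _ j).
Qed.

Lemma sum_psi (R : realType) N (r : R) (v : 'I_N -> R) : (2 <= N)%N -> 0 < r ->
  \sum_i psi N r (v i) <= psi N r (vfirst v) + (N.-1)%:R * psi N r (vsecond v).
Proof.
move=> N2 r0.
have hnd := psi_nd R N r N2 r0.
case: (pselect (exists i, vsecond v < v i)) => [[i0 hi0]|hno].
  rewrite (bigD1 i0)//= lerD//; first exact/hnd/vfirst_ge.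
  have h : forall j, j != i0 -> psi N r (v j) <= psi N r (vsecond v).
    move=> j ji; apply: hnd; have := vsecond_ge R N v i0 j ji.
    by rewrite ge_min leNgt hi0 /=.
  apply: le_trans (ler_sum _ h) _.
  by rewrite sumr_const cardC1 card_ord mulr_natl.
have h : forall j, psi N r (v j) <= psi N r (vsecond v).
  move=> j; apply: hnd; rewrite leNgt; apply/negP => hj; apply: hno; by exists j.
apply: le_trans (ler_sum _ (fun j _ => h j)) _.
rewrite sumr_const card_ord -[_ *+ N]mulr_natl (natN1 R N N2) mulrDl mul1r addrC lerD2r.
by apply: hnd; exact: vsecond_le.
Qed.

Lemma top_term (R : realType) N (r x : R) : (2 <= N)%N -> 0 < r -> 0 <= x ->
  x * Gr N r x - Jf N r x = psi N r x / N%:R.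
Proof.
move=> N2 r0 x0; rewrite /Jf /psi.
have nN : N%:R != 0 :> R by rewrite pnatr_eq0 gtn_eqF// ltnW.
have hN := natN1 R N N2.
have [xr|rx] := leP x r.
  have -> : Num.max (x - r) 0 = 0 by apply/max_idPr; rewrite subr_le0.
  rewrite addr0.
  by rewrite hN; field; rewrite -hN.
have -> : Num.max (x - r) 0 = x - r by apply/max_idPl; rewrite subr_ge0 ltW.
rewrite !Gr_ger// ?(ltW rx)// !mulr1.
by rewrite hN; field; rewrite -hN.
Qed.

Lemma pointwise (R : realType) N (r : R) (v : 'I_N -> R) : (2 <= N)%N -> 0 < r ->
  N%:R^-1 * \sum_i psi N r (v i) <= spa_revenue (Gr N r) v.
Proof.
move=> N2 r0.
have nN : 0 < N%:R :> R by rewrite ltr0n ltnW.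
rewrite /spa_revenue Rint_ab ?vsecond_ge0 ?vsecond_le//.
have ht := top_term R N r (vfirst v) N2 r0 (vfirst_ge0 R N v).
have -> : vfirst v * Gr N r (vfirst v) - (Jf N r (vfirst v) - Jf N r (vsecond v)) =
    psi N r (vfirst v) / N%:R + Jf N r (vsecond v).
  by rewrite -ht; ring.
have hJ : (N.-1)%:R / N%:R * psi N r (vsecond v) <= Jf N r (vsecond v).
  by rewrite /Jf lerDl le_max lexx orbT.
apply: le_trans (lerD (lexx _) hJ).
have nN' : 0 <= N%:R^-1 :> R by rewrite invr_ge0 ltW.
apply: le_trans (ler_wpM2l nN' (sum_psi R N r v N2 r0)) _.
rewrite le_eqVlt; apply/orP; left; apply/eqP; field.
by rewrite gt_eqF.
Qed.

Lemma le_integral_nm d (T : measurableType d) (R : realType)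
  (mu : {measure set T -> \bar R}) (f g : T -> R) :
  (forall x, 0 <= f x) -> (forall x, f x <= g x) ->
  (\int[mu]_x (f x)%:E <= \int[mu]_x (g x)%:E)%E.
Proof.
move=> f0 fg.
rewrite !ge0_integralTE => [|x|x]; last 2 first.
- by rewrite lee_fin (le_trans (f0 x) (fg x)).
- by rewrite lee_fin.
apply: le_ereal_sup => _ [h hf <-]; exists h => //= x.
by apply: le_trans (hf x) _; rewrite lee_fin.
Qed.

Lemma psi_pow (R : realType) N (r x : R) : (2 <= N)%N -> 0 < r -> 0 <= x -> x <= r ->
  x `^ (N%:R / (N.-1)%:R) / r `^ (1 / (N.-1)%:R) = psi N r x.
Proof.
move=> N2 r0 x0 xr.
have n0 : (N.-1)%:R != 0 :> R by rewrite gt_eqF// ltr0n; case: N N2 => [|[|n]].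
have a0 := alpha_gt0 R N N2.
have eb : N%:R / (N.-1)%:R = 1 + 1 / (N.-1)%:R :> R.
  by rewrite (natN1 R N N2); field.
rewrite /psi.
have -> : Num.min x r = x by apply/min_idPl.
rewrite Gr_eq// eb powRD; last by rewrite gt_eqF ?implybT// addr_gt0.
by rewrite powRr1//; ring.
Qed.

Theorem lemma1 (R : realType) (N : nat) (r : R)
  (mu : probability R R)
  (d : measure_display) (Omega : measurableType d) (P : probability Omega R)
  (X : 'I_N -> Omega -> R) :
  (2 <= N)%N -> 0 < r < 1 ->
  mu `[0, 1]%classic = 1%E ->
  (forall i, measurable_fun setT (X i)) ->
  (forall i (A : set R), measurable A -> P (X i @^-1` A) = mu A) ->
  ((\int[mu]_(x in (`[0%R, r]%classic : set R)) (x `^ (N%:R / (N.-1)%:R) / r `^ (1 / (N.-1)%:R))%:E)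
     + r%:E * mu (`]r, +oo[%classic : set R) <=
   \int[P]_w (spa_revenue (Gr N r) (fun i => X i w))%:E)%E.
Proof.
move=> N2 /andP[r0 r1] _ hXm hX.
have mps : measurable_fun setT (psi N r).
  exact: nondecreasing_measurable (psi_nd R N r N2 r0).
have mpsE : measurable_fun setT (fun x => (psi N r x)%:E).
  exact/measurable_EFinP.
have hB i : (\int[P]_w (psi N r (X i w))%:E = \int[mu]_x (psi N r x)%:E)%E.
  have h := ge0_integral_pushforward (hXm i) P measurableT mpsE
    (fun y _ => psi_ge0 R N r y).
  rewrite preimage_setT in h.
  apply: (eq_trans (esym h)).
  apply: eq_measure_integral => A mA _ /=.
  exact: hX.
have nN : 0 < N%:R :> R by rewrite ltr0n ltnW.
have hC : (\int[P]_w (N%:R^-1 * \sum_i psi N r (X i w))%:E = \int[mu]_x (psi N r x)%:E)%E.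
  under eq_integral => w _ do rewrite EFinM -sumEFin.
  rewrite ge0_integralZl//; last 2 first.
  - rewrite (_ : (fun x => _) = EFin \o (fun x => \sum_i psi N r (X i x))); last first.
      by apply/funext => x; rewrite /= sumEFin.
    apply/measurable_EFinP; apply: measurable_sum => i.
    exact: measurableT_comp mps (hXm i).
  - by move=> w _; apply: sume_ge0 => i _; rewrite lee_fin psi_ge0.
  rewrite ge0_integral_sum//; last 2 first.
  - move=> i; apply/measurable_EFinP; exact: measurableT_comp mps (hXm i).
  - by move=> i w _; rewrite lee_fin psi_ge0.
  under eq_bigr => i _ do rewrite hB.
  rewrite sumr_const (_ : #|_| = N); last exact: card_ord.
  set c := (\int[mu]_x _)%E.
  have -> : (c *+ N)%R = (N%:R%:E * c)%E by rewrite mule_natl.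
  by rewrite muleA -EFinM mulVf ?gt_eqF// mul1e.
apply: (@le_trans _ _ (\int[mu]_x (psi N r x)%:E)%E).
  have e1 : (\int[mu]_(x in (`[0%R, r]%classic : set R))
      (x `^ (N%:R / (N.-1)%:R) / r `^ (1 / (N.-1)%:R))%:E =
      \int[mu]_(x in (`[0%R, r]%classic : set R)) (psi N r x)%:E)%E.
    apply: eq_integral => x; rewrite inE/= in_itv/= => /andP[x0 xr].
    by rewrite psi_pow.
  have e2 : (r%:E * mu (`]r, +oo[%classic : set R) =
      \int[mu]_(x in (`]r, +oo[%classic : set R)) (psi N r x)%:E)%E.
    rewrite (eq_integral (cst r%:E)); first by rewrite integral_cst.
    move=> x; rewrite inE/= in_itv/= andbT => rx.
    rewrite /psi.
    have -> : Num.min x r = r by apply/min_idPr; rewrite ltW.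
    by rewrite Gr_ger// mulr1.
  rewrite e1 e2 -ge0_integral_setU//; last 3 first.
  - exact: measurable_funS mpsE.
  - by move=> x _; rewrite lee_fin psi_ge0.
  - rewrite disj_set2E; apply/eqP/seteqP; split => // x [] /=.
    rewrite !in_itv/= andbT => /andP[_ xr] rx.
    by move: (lt_le_trans rx xr); rewrite ltxx.
  apply: ge0_subset_integral => //.
  - exact: measurableU.
  - by move=> x _; rewrite lee_fin psi_ge0.
rewrite -hC; apply: le_integral_nm.
- by move=> w; rewrite mulr_ge0 ?invr_ge0 ?(ltW nN)// sumr_ge0// => i _; exact: psi_ge0.
- by move=> w; exact: pointwise.
Qed.
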